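(* Let $\mathcal{C}$ be the complete computational structure of a linear system $G$ with generalized state-space realization $\dot{x}=Ax+\hat{A}w+Bu$, $w=\bar{A}x+\tilde{A}w+\bar{B}u$, $y=Cx+\bar{C}w+Du$ ($I-\tilde{A}$ invertible), and suppose its minimal intricacy realization $(A_o,B_o,C_o,D_o)$ has $C_o=\begin{bmatrix}C_{11}&C_{12}\\C_{21}&C_{22}\end{bmatrix}$ with $C_{11}$ invertible. Then $\mathcal{C}$ specifies a unique subsystem structure, a unique signal structure, and a unique sparsity structure.
   Context: Inputs $u\in\mathbb{R}^m$, states $x\in\mathbb{R}^n$, auxiliary variables $w\in\mathbb{R}^l$, outputs $y\in\mathbb{R}^p$. Complete computational structure $\mathcal{C}$: directed graph with one vertex per input, state, auxiliary variable and output; an edge from vertex $a$ to vertex $b$ (labelled by the variable produced at $a$) whenever the equation defining the variable at $b$ depends on the variable at $a$ (nonzero coefficient). Inputs and outputs are manifest; states are hidden; auxiliary variables are hidden unless passed directly out as outputs. A partition of $V(\mathcal{C})$ is admissible if every edge between distinct components represents a manifest variable. The subsystem structure is the condensation graph of $\mathcal{C}$ with respect to an admissible partition of maximal cardinality (vertices = components, labelled by their transfer functions; edge $(S_i,S_j)$ if some edge of $\mathcal{C}$ goes from $S_i$ to $S_j$). Minimal intricacy realization: $A_o=A+\hat{A}(I-\tilde{A})^{-1}\bar{A}$, $B_o=B+\hat{A}(I-\tilde{A})^{-1}\bar{B}$, $C_o=C+\bar{C}(I-\tilde{A})^{-1}\bar{A}$, $D_o=D+\bar{C}(I-\tilde{A})^{-1}\bar{B}$.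 Signal structure: let $p_1=\operatorname{rank}C_o$, with outputs/states ordered so that $C_{11}\in\mathbb{R}^{p_1\times p_1}$ is invertible. Let $\begin{bmatrix}N_1\\N_2\end{bmatrix}$ ($N_2\in\mathbb{R}^{(n-p_1)\times(n-p_1)}$) have columns forming a basis of $\ker C_o$ (then $N_2$ is invertible), and $T=\begin{bmatrix}C_{11}&C_{12}\\0&N_2^{-1}\end{bmatrix}$. In coordinates $z=Tx$ the system reads $\dot{z}_1=A_{11}z_1+A_{12}z_2+B_1u$, $\dot{z}_2=A_{21}z_1+A_{22}z_2+B_2u$, $y_1=z_1+D_1u$, $y_2=C_2z_1+D_2u$, with $C_2=C_{21}C_{11}^{-1}$. Put $W(s)=A_{11}+A_{12}(sI-A_{22})^{-1}A_{21}$, $V(s)=B_1+A_{12}(sI-A_{22})^{-1}B_2$, $\hat{D}(s)$ the diagonal part of $W(s)$, $Q(s)=(sI-\hat{D})^{-1}(W-\hat{D})$, $P(s)=(sI-\hat{D})^{-1}V$; $(Q,P)$ is the dynamical structure function and $Y_1=QY_1+(P+(I-Q)D_1)U$, $Y_2=C_2Y_1+D_2U$. The signal structure is the directed graph with vertices $u_1,\dots,u_m,y_{11},\dots,y_{1p_1},y_{21},\dots,y_{2(p-p_1)}$ and an edge $u_i\to y_{1j}$, $u_i\to y_{2j}$, $y_{1i}\to y_{1j}$, $y_{1i}\to y_{2j}$ whenever the corresponding entry of $P+(I-Q)D_1$, $D_2$, $Q$, $C_2$ respectively is nonzero, labelled by that entry. Sparsity structure: bipartite directed graph with vertices $u_1,\dots,u_m,y_1,\dots,y_p$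 and an edge $u_i\to y_j$ (labelled $G_{ji}$) whenever the $(j,i)$ entry of the transfer function $G(s)=C_o(sI-A_o)^{-1}B_o+D_o$ is nonzero. *)

(* Defs.v *)
From HB Require Import structures.
From mathcomp Require Import all_boot all_order all_algebra.
From mathcomp Require Import fraction.
Set Implicit Arguments. Unset Strict Implicit. Unset Printing Implicit Defensive.
Import Order.TTheory GRing.Theory Num.Theory.
Local Open Scope ring_scope.

Definition ratF (R : realFieldType) := {fraction {poly R}}.

Definition cstF (R : realFieldType) (a : R) : ratF R := FracField.tofrac (a%:P).
Definition sF (R : realFieldType) : ratF R := FracField.tofrac 'X.
Definition mxF (R : realFieldType) (k q : nat) (M : 'M[R]_(k, q)) : 'M[ratF R]_(k, q) :=
  map_mx (@cstF R) M.

Section MinInt.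
Variables (R : realFieldType) (m n l p : nat).
Variables (A : 'M[R]_n) (Ahat : 'M[R]_(n, l)) (B : 'M[R]_(n, m))
          (Abar : 'M[R]_(l, n)) (Atil : 'M[R]_l) (Bbar : 'M[R]_(l, m))
          (C : 'M[R]_(p, n)) (Cbar : 'M[R]_(p, l)) (D : 'M[R]_(p, m)).

Definition Ao : 'M[R]_n := A + Ahat *m invmx (1%:M - Atil) *m Abar.
Definition Bo : 'M[R]_(n, m) := B + Ahat *m invmx (1%:M - Atil) *m Bbar.
Definition Co : 'M[R]_(p, n) := C + Cbar *m invmx (1%:M - Atil) *m Abar.
Definition Do : 'M[R]_(p, m) := D + Cbar *m invmx (1%:M - Atil) *m Bbar.

Definition ccs_vertex : finType := (('I_m + 'I_n) + ('I_l + 'I_p))%type.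

Definition vU (i : 'I_m) : ccs_vertex := inl (inl i).
Definition vX (i : 'I_n) : ccs_vertex := inl (inr i).
Definition vW (i : 'I_l) : ccs_vertex := inr (inl i).
Definition vY (i : 'I_p) : ccs_vertex := inr (inr i).

(* coefficient of the variable produced at a in the equation defining the
   variable at b (0 if b is an input, which has no defining equation, or
   if a is an output, whose variable appears in no equation) *)
Definition ccs_coef (a b : ccs_vertex) : R :=
  match b with
  | inl (inl _) => 0
  | inl (inr i) =>
      match a with
      | inl (inl j) => B i j | inl (inr j) => A i j
      | inr (inl j) => Ahat i j | inr (inr _) => 0 end
  | inr (inl i) =>
      match a with
      | inl (inl j) => Bbar i j | inl (inr j) => Abar i j
      | inr (inl j) => Atil i j | inr (inr _) => 0 end
  | inr (inr i) =>
      match a with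
      | inl (inl j) => D i j | inl (inr j) => C i j
      | inr (inl j) => Cbar i j | inr (inr _) => 0 end
  end.

Definition ccs_edge (a b : ccs_vertex) : bool := ccs_coef a b != 0.

(* auxiliary variable w_k is passed directly out as an output:
   some output equation reads y_j = w_k *)
Definition aux_output (k : 'I_l) : Prop :=
  exists j : 'I_p, [/\ forall i, C j i = 0,
                       forall i, Cbar j i = (i == k)%:R
                     & forall i, D j i = 0].

Definition manifest (a : ccs_vertex) : Prop :=
  match a with
  | inl (inl _) => True
  | inl (inr _) => False
  | inr (inl k) => aux_output k
  | inr (inr _) => True
  end.

Definition admissible (P : {set {set ccs_vertex}}) : Prop :=
  partition P [set: ccs_vertex] /\
  forall a b, ccs_edge a b -> pblock P a != pblock P b -> manifest a.

Definition max_admissible (P : {set {set ccs_vertex}}) : Prop :=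
  admissible P /\ forall P', admissible P' -> (#|P'| <= #|P|)%N.

Definition condensation_edge (P : {set {set ccs_vertex}}) (S1 S2 : {set ccs_vertex}) : Prop :=
  [/\ S1 \in P, S2 \in P & exists a b, [/\ a \in S1, b \in S2 & ccs_edge a b]].

Definition transfer_fun : 'M[ratF R]_(p, m) :=
  mxF Co *m invmx ((sF R)%:M - mxF Ao) *m mxF Bo + mxF Do.

(* transfer function computed directly from the generalized realization
   (eliminating nothing by hand):
   Y = [C Cbar] (diag(sI, I) - [A Ahat; Abar Atil])^-1 [B; Bbar] U + D U *)
Definition transfer_fun_gen : 'M[ratF R]_(p, m) :=
  mxF (row_mx C Cbar) *m
    invmx (block_mx ((sF R)%:M) 0 0 1%:M - mxF (block_mx A Ahat Abar Atil))
    *m mxF (col_mx B Bbar) + mxF D.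

(* sparsity structure: label of edge u_i -> y_j (edge present iff nonzero) *)
Definition sparsity_label (i : 'I_m) (j : 'I_p) : ratF R := transfer_fun j i.

End MinInt.

(* Signal structure, for outputs/states ordered so that                *)
(* p = p1 + p2, n = p1 + n2, with C11 = ulsubmx Co invertible.          *)
Section Signal.
Variables (R : realFieldType) (m l p1 p2 n2 : nat).
Variables (A : 'M[R]_(p1 + n2)) (Ahat : 'M[R]_(p1 + n2, l)) (B : 'M[R]_(p1 + n2, m))
          (Abar : 'M[R]_(l, p1 + n2)) (Atil : 'M[R]_l) (Bbar : 'M[R]_(l, m))
          (C : 'M[R]_(p1 + p2, p1 + n2)) (Cbar : 'M[R]_(p1 + p2, l))
          (D : 'M[R]_(p1 + p2, m)).
Variable (N : 'M[R]_(p1 + n2, n2)).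

Let Co' := Co Abar Atil C Cbar.
Let Ao' := Ao A Ahat Abar Atil.
Let Bo' := Bo Ahat B Atil Bbar.
Let Do' := Do Atil Bbar Cbar D.

Definition kernel_basis : Prop := Co' *m N = 0 /\ \rank N = n2.

Definition Tmx : 'M[R]_(p1 + n2) :=
  block_mx (ulsubmx Co') (ursubmx Co') 0 (invmx (dsubmx N)).

Definition Az : 'M[R]_(p1 + n2) := Tmx *m Ao' *m invmx Tmx.
Definition Bz : 'M[R]_(p1 + n2, m) := Tmx *m Bo'.

Definition C2 : 'M[R]_(p2, p1) := dlsubmx Co' *m invmx (ulsubmx Co').
Definition D1 : 'M[R]_(p1, m) := usubmx Do'.
Definition D2 : 'M[R]_(p2, m) := dsubmx Do'.

Definition Wsig : 'M[ratF R]_p1 :=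
  mxF (ulsubmx Az) + mxF (ursubmx Az) *m invmx ((sF R)%:M - mxF (drsubmx Az))
                     *m mxF (dlsubmx Az).
Definition Vsig : 'M[ratF R]_(p1, m) :=
  mxF (usubmx Bz) + mxF (ursubmx Az) *m invmx ((sF R)%:M - mxF (drsubmx Az))
                    *m mxF (dsubmx Bz).
Definition Dhat : 'M[ratF R]_p1 := \matrix_(i, j) (if i == j then Wsig i j else 0).

Definition Qdsf : 'M[ratF R]_p1 := invmx ((sF R)%:M - Dhat) *m (Wsig - Dhat).
Definition Pdsf : 'M[ratF R]_(p1, m) := invmx ((sF R)%:M - Dhat) *m Vsig.
Definition Ptil : 'M[ratF R]_(p1, m) := Pdsf + (1%:M - Qdsf) *m mxF D1.

(* vertices of the signal structure: u_i, y_{1i}, y_{2i} *)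
Definition sig_vertex : finType := ('I_m + ('I_p1 + 'I_p2))%type.

(* label of the edge a -> b (the edge is present iff the label is nonzero) *)
Definition signal_structure (a b : sig_vertex) : ratF R :=
  match a, b with
  | inl i, inr (inl j) => Ptil j i
  | inl i, inr (inr j) => cstF (D2 j i)
  | inr (inl i), inr (inl j) => Qdsf j i
  | inr (inl i), inr (inr j) => cstF (C2 j i)
  | _, _ => 0
  end.

End Signal.

(* Main.v *)
Require Import Defs.
From HB Require Import structures.
From mathcomp Require Import all_boot all_order all_algebra.
From mathcomp Require Import fraction.
From Stdlib Require Import ClassicalDescription.
Set Implicit Arguments. Unset Strict Implicit. Unset Printing Implicit Defensive.
Import Order.TTheory GRing.Theory Num.Theory.
Local Open Scope ring_scope.
Local Open Scope nat_scope.
Section Part1.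
Variables (T : finType) (e : rel T) (mf : T -> Prop) (hb : pred T).
Hypothesis Hb : forall a, mf a <-> ~~ hb a.

Definition admG (P : {set {set T}}) : Prop :=
  partition P [set: T] /\
  forall a b, e a b -> pblock P a != pblock P b -> mf a.

Definition er : rel T := fun a b => (e a b && hb a) || (e b a && hb b).
Lemma er_sym : symmetric er.
Proof. by move=> a b; rewrite /er orbC. Qed.
Let csym := sym_connect_sym er_sym.

Definition P0 := equivalence_partition (connect er) [set: T].

Lemma er_equiv : {in [set: T] & &, equivalence_rel (connect er)}.
Proof.
move=> x y z _ _ _; split; first exact: connect0.
by move=> Hxy; apply: same_connect.
Qed.

Lemma P0_part : partition P0 [set: T].
Proof. exact: equivalence_partitionP er_equiv. Qed.

Lemma P0_pblock x y : (y \in pblock P0 x) = connect er x y.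
Proof. by rewrite (pblock_equivalence_partition er_equiv) ?inE. Qed.

Lemma adm_connect P : admG P -> forall x y, connect er x y -> pblock P x = pblock P y.
Proof.
move=> [HP Hadm] x y Hxy.
have cov : forall z, z \in cover P by move=> z; rewrite (cover_partition HP) inE.
have triv : trivIset P by case/and3P: HP.
pose a := [pred z | pblock P z == pblock P x].
have cl : closed er a.
  apply: intro_closed => // u v Huv; rewrite !inE => /eqP <-.
  apply/eqP; apply/esym/eqP; apply: contraT => Hne.
  case/orP: Huv => /andP[Huv Hu].
    by move: (Hadm _ _ Huv Hne) => /Hb; rewrite Hu.
  have Hne' : pblock P v != pblock P u by rewrite eq_sym.
  by move: (Hadm _ _ Huv Hne') => /Hb; rewrite Hu.
have := closed_connect cl Hxy; rewrite !inE eqxx => /esym/eqP; by [].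
Qed.

Lemma P0_adm : admG P0.
Proof.
split; first exact: P0_part.
move=> a b Hab Hne; apply/Hb; apply/negP => Ha.
have Hc : connect er a b by apply: connect1; rewrite /er Hab Ha.
have triv : trivIset P0 by case/and3P: P0_part.
have cov : a \in cover P0 by rewrite (cover_partition P0_part) inE.
by move: Hne; rewrite (eq_pblock _ triv cov) P0_pblock Hc.
Qed.

Section F.
Variable P : {set {set T}}.
Hypothesis HP : admG P.
Definition fP (B : {set T}) := if [pick x in B] is Some x then pblock P x else set0.

Let HPp := HP.1.
Let trivP : trivIset P. Proof. by case/and3P: HPp. Qed.
Let covP z : z \in cover P. Proof. by rewrite (cover_partition HPp) inE. Qed.
Let triv0 : trivIset P0. Proof. by case/and3P: P0_part. Qed.
Let cov0 z : z \in cover P0. Proof. by rewrite (cover_partition P0_part) inE. Qed.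

Lemma fP_pblock x : fP (pblock P0 x) = pblock P x.
Proof.
rewrite /fP; case: pickP => [y Hy | H]; last by move: (H x); rewrite mem_pblock cov0.
by rewrite P0_pblock in Hy; rewrite (adm_connect HP Hy).
Qed.

Lemma P_sub : P \subset [set fP B | B in P0].
Proof.
apply/subsetP => C HC.
have : C != set0 by apply: contraTneq HC => ->; rewrite (partition0 HPp).
case/set0Pn => x Hx.
apply/imsetP; exists (pblock P0 x); first exact: pblock_mem (cov0 x).
by rewrite fP_pblock (def_pblock trivP HC Hx).
Qed.

Lemma card_le : #|P| <= #|P0|.
Proof.
apply: leq_trans (subset_leq_card P_sub) _; exact: leq_imset_card.
Qed.

Lemma card_eq_P0 : #|P| = #|P0| -> P = P0.
Proof.
move=> Hc.
have sub2 : [set fP B | B in P0] \subset P.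
  apply/subsetP => C /imsetP[B HB ->].
  have : B != set0 by apply: contraTneq HB => ->; rewrite (partition0 P0_part).
  case/set0Pn => x Hx; rewrite -(def_pblock triv0 HB Hx) fP_pblock; exact: pblock_mem (covP x).
have Heq : #|[set fP B | B in P0]| = #|P0|.
  apply/eqP; rewrite eqn_leq leq_imset_card -Hc; exact: subset_leq_card P_sub.
have /imset_injP inj : #|[set fP B | B in P0]| == #|P0| by rewrite Heq.
have Hblk : forall x, pblock P x = pblock P0 x.
  move=> x; apply/setP => y; apply/idP/idP => Hy; last first.
    have := adm_connect HP; rewrite P0_pblock in Hy => H.
    by rewrite (H _ _ Hy) mem_pblock covP.
  apply: contraT => Hny.
  have Hne : pblock P0 y != pblock P0 x.
    by rewrite eq_pblock // P0_pblock csym -P0_pblock.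
  have Hpx : pblock P y = pblock P x.
    exact: (def_pblock trivP (pblock_mem (covP x)) Hy).
  have Hf : fP (pblock P0 y) = fP (pblock P0 x) by rewrite !fP_pblock.
  by rewrite (inj _ _ (pblock_mem (cov0 y)) (pblock_mem (cov0 x)) Hf) eqxx in Hne.
apply/setP => C; apply/idP/idP => HC.
  have : C != set0 by apply: contraTneq HC => ->; rewrite (partition0 HPp).
  case/set0Pn => x Hx; rewrite -(def_pblock trivP HC Hx) Hblk; exact: pblock_mem (cov0 x).
have : C != set0 by apply: contraTneq HC => ->; rewrite (partition0 P0_part).
case/set0Pn => x Hx; rewrite -(def_pblock triv0 HC Hx) -Hblk; exact: pblock_mem (covP x).
Qed.
End F.

Lemma part1_gen :
  (exists P, admG P /\ forall P', admG P' -> #|P'| <= #|P|) /\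
  (forall P P', (admG P /\ forall Q, admG Q -> #|Q| <= #|P|) ->
                (admG P' /\ forall Q, admG Q -> #|Q| <= #|P'|) -> P = P').
Proof.
split; first by exists P0; split; [exact: P0_adm | move=> P' HP'; exact: card_le].
move=> P P' [HP HmP] [HP' HmP'].
have E1 : #|P| = #|P0| by apply/eqP; rewrite eqn_leq (card_le HP) (HmP _ P0_adm).
have E2 : #|P'| = #|P0| by apply/eqP; rewrite eqn_leq (card_le HP') (HmP' _ P0_adm).
by rewrite (card_eq_P0 HP E1) (card_eq_P0 HP' E2).
Qed.
End Part1.

Local Open Scope ring_scope.
HB.instance Definition _ (R : realFieldType) :=
  GRing.RMorphism.copy (@cstF R) (@tofrac {poly R} \o polyC).

Lemma sI_unit (R : realFieldType) k (M : 'M[R]_k) : (sF R)%:M - mxF M \in unitmx.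
Proof.
have -> : (sF R)%:M - mxF M = map_mx (@tofrac _) (char_poly_mx M).
  apply/matrixP => i j; rewrite !mxE tofracB tofracMn.
  by [].
rewrite unitmxE det_map_mx unitfE tofrac_eq0 -/(char_poly M) monic_neq0 //.
exact: char_poly_monic.
Qed.

Lemma invmx_mul (F : fieldType) k (A B : 'M[F]_k) :
  A \in unitmx -> B \in unitmx -> invmx (A *m B) = invmx B *m invmx A.
Proof.
move=> HA HB.
have H1 : (A *m B) *m (invmx B *m invmx A) = 1%:M.
  by rewrite mulmxA mulmxK // mulmxV.
have [HM _] := mulmx1_unit H1.
by rewrite -[RHS](mulKmx HM) H1 mulmx1.
Qed.

Lemma inv_unit (F : fieldType) k (A : 'M[F]_k) : A \in unitmx -> invmx A \in unitmx.
Proof. by rewrite unitmx_inv. Qed.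
Lemma mul_unit (F : fieldType) k (A B : 'M[F]_k) : A \in unitmx -> B \in unitmx -> A *m B \in unitmx.
Proof. by rewrite unitmx_mul => -> ->. Qed.

Lemma W_gen (F : fieldType) k q r (s : F) (ma : 'M[F]_(k, r)) (mb : 'M_(k, q))
   (mc : 'M_(q, r)) (md mX : 'M_q) : mX \in unitmx -> s%:M - md \in unitmx ->
  ma + mb *m invmx mX *m invmx (s%:M - mX *m md *m invmx mX) *m (mX *m mc) =
  ma + mb *m invmx (s%:M - md) *m mc.
Proof.
move=> HmX HY.
have -> : s%:M - mX *m md *m invmx mX = mX *m (s%:M - md) *m invmx mX.
  by rewrite mulmxBr mulmxBl scalar_mxC (mulmxK HmX).
have HmXi : invmx mX \in unitmx by exact: inv_unit.
have HXY : mX *m (s%:M - md) \in unitmx by exact: mul_unit.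
rewrite (invmx_mul HXY HmXi) (invmx_mul HmX HY) invmxK.
by rewrite !mulmxA !mulmxKV.
Qed.

Lemma W_inv (R : realFieldType) k q r (a : 'M[R]_(k, r)) (b : 'M_(k, q))
   (c : 'M_(q, r)) (d : 'M_q) (X : 'M_q) : X \in unitmx ->
  mxF a + mxF (b *m invmx X) *m invmx ((sF R)%:M - mxF (X *m d *m invmx X))
     *m mxF (X *m c) =
  mxF a + mxF b *m invmx ((sF R)%:M - mxF d) *m mxF c.
Proof.
move=> HX; rewrite /mxF !map_mxM !map_invmx.
apply: W_gen; first by rewrite map_unitmx.
exact: sI_unit.
Qed.

Section Sig.
Variables (R : realFieldType) (m l p1 p2 n2 : nat).
Variables (A : 'M[R]_(p1 + n2)) (Ahat : 'M[R]_(p1 + n2, l)) (B : 'M[R]_(p1 + n2, m))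
          (Abar : 'M[R]_(l, p1 + n2)) (Atil : 'M[R]_l) (Bbar : 'M[R]_(l, m))
          (C : 'M[R]_(p1 + p2, p1 + n2)) (Cbar : 'M[R]_(p1 + p2, l))
          (D : 'M[R]_(p1 + p2, m)).
Local Notation Co' := (Co Abar Atil C Cbar).
Local Notation C11 := (ulsubmx Co').
Local Notation C12 := (ursubmx Co').
Local Notation C21 := (dlsubmx Co').
Local Notation C22 := (drsubmx Co').
Hypothesis HC11 : C11 \in unitmx.

Definition K0 : 'M[R]_(p1 + n2, n2) := col_mx (- invmx C11 *m C12) 1%:M.

Lemma kb_form N : kernel_basis Abar Atil C Cbar N -> N = K0 *m dsubmx N.
Proof.
case=> HN _.
move: HN; rewrite -[Co'](submxK) -[N in _ *m N](vsubmxK) mul_block_col => /eqP.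
rewrite col_mx_eq0 => /andP[/eqP H1 _].
rewrite /K0 mul_col_mx mul1mx -[N in LHS]vsubmxK.
suff -> : usubmx N = - invmx C11 *m C12 *m dsubmx N by [].
move/eqP: H1; rewrite addr_eq0 => /eqP H1.
have := f_equal (mulmx (invmx C11)) H1; rewrite (mulKmx HC11) => ->.
by rewrite mulmxN !mulNmx mulmxA.
Qed.

Lemma kb_unit N : kernel_basis Abar Atil C Cbar N -> dsubmx N \in unitmx.
Proof.
move=> HN; have E := kb_form HN; case: HN => _ Hr.
have H : (n2 <= \rank (dsubmx N))%N by rewrite -{1}Hr {1}E mxrankM_maxr.
by rewrite -row_free_unit /row_free eqn_leq rank_leq_row H.
Qed.

Lemma schur0 : \rank Co' = p1 -> C22 = C21 *m invmx C11 *m C12.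
Proof.
move=> Hr.
have HU : \rank (usubmx Co') = p1.
  apply/eqP; rewrite eqn_leq rank_leq_row /=.
  have E : C11 = usubmx Co' *m col_mx 1%:M 0.
    by rewrite -[usubmx Co']hsubmxK mul_row_col mulmx1 mulmx0 addr0.
  by rewrite -{1}(mxrank_unit HC11) E mxrankM_maxl.
have HsubU : (usubmx Co' <= Co')%MS.
  have := submx_refl (col_mx (usubmx Co') (dsubmx Co')).
  by rewrite col_mx_sub vsubmxK => /andP[].
have HsubD : (dsubmx Co' <= Co')%MS.
  have := submx_refl (col_mx (usubmx Co') (dsubmx Co')).
  by rewrite col_mx_sub vsubmxK => /andP[].
have HCU : (Co' <= usubmx Co')%MS by rewrite -(mxrank_leqif_sup HsubU).2 HU Hr.
have /submxP[X HX] : (dsubmx Co' <= usubmx Co')%MS := submx_trans HsubD HCU.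
rewrite -[dsubmx Co']hsubmxK -[usubmx Co']hsubmxK mul_mx_row in HX.
case/eq_row_mx: HX => H21 H22.
have H21' : C21 = X *m C11 := H21.
have H22' : C22 = X *m C12 := H22.
by rewrite H22' H21' (mulmxK HC11).
Qed.

Lemma kb_exists : \rank Co' = p1 -> kernel_basis Abar Atil C Cbar K0.
Proof.
move=> Hr; split.
  rewrite -[Co']submxK /K0 mul_block_col !mulmx1 !mulNmx !mulmxN mulmxA (mulmxV HC11) mul1mx.
  by rewrite (schur0 Hr) mulmxA !addNr col_mx0.
apply/eqP; rewrite eqn_leq rank_leq_col /=.
have E : row_mx 0 1%:M *m K0 = 1%:M by rewrite /K0 mul_row_col mul0mx mul1mx add0r.
by rewrite -{1}(mxrank1 R n2) -E mxrankM_maxr.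
Qed.

Definition T0 : 'M[R]_(p1 + n2) := block_mx C11 C12 0 1%:M.
Lemma T0_unit : T0 \in unitmx.
Proof. by rewrite unitmxE det_ublock det1 mulr1 -unitmxE. Qed.
Definition SX (X : 'M[R]_n2) : 'M[R]_(p1 + n2) := block_mx 1%:M 0 0 X.
Lemma SX_unit X : X \in unitmx -> SX X \in unitmx.
Proof. by rewrite !unitmxE /SX det_ublock det1 mul1r. Qed.
Lemma SX_inv X : X \in unitmx -> invmx (SX X) = SX (invmx X).
Proof.
move=> HX.
have H1 : SX X *m SX (invmx X) = 1%:M.
  rewrite /SX mulmx_block !mulmx0 !mul0mx !mulmx1 addr0 add0r (mulmxV HX) addr0.
  by rewrite add0r [RHS]scalar_mx_block.
have [HM _] := mulmx1_unit H1.
by rewrite -[RHS](mulKmx HM) H1 mulmx1.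
Qed.

Lemma Tmx_eq N : Tmx Abar Atil C Cbar N = SX (invmx (dsubmx N)) *m T0.
Proof.
by rewrite /Tmx /SX /T0 mulmx_block !mul1mx !mul0mx !mulmx0 !mulmx1 !addr0 !add0r.
Qed.

Lemma conj_SX X (M : 'M[R]_(p1 + n2)) : X \in unitmx ->
  SX X *m M *m invmx (SX X) =
  block_mx (ulsubmx M) (ursubmx M *m invmx X) (X *m dlsubmx M) (X *m drsubmx M *m invmx X).
Proof.
move=> HX; rewrite SX_inv // -[M in LHS]submxK /SX !mulmx_block.
by rewrite !mul1mx !mul0mx !mulmx0 !mulmx1 !addr0 !add0r.
Qed.

Definition A0 := T0 *m Ao A Ahat Abar Atil *m invmx T0.
Definition B0 := T0 *m Bo Ahat B Atil Bbar.

Lemma Az_eq N : kernel_basis Abar Atil C Cbar N ->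
  Az A Ahat Abar Atil C Cbar N =
  SX (invmx (dsubmx N)) *m A0 *m invmx (SX (invmx (dsubmx N))).
Proof.
move=> HN; have HX : invmx (dsubmx N) \in unitmx by rewrite unitmx_inv; exact: kb_unit.
rewrite /Az Tmx_eq invmx_mul ?SX_unit ?T0_unit //.
by rewrite /A0 !mulmxA.
Qed.

Lemma Bz_eq N : Bz Ahat B Abar Atil Bbar C Cbar N =
  col_mx (usubmx B0) (invmx (dsubmx N) *m dsubmx B0).
Proof.
rewrite /Bz Tmx_eq -mulmxA -/B0 -[B0 in LHS]vsubmxK /SX mul_block_col.
by rewrite mul1mx !mul0mx addr0 add0r.
Qed.

Lemma Wsig_eq N : kernel_basis Abar Atil C Cbar N ->
  Wsig A Ahat Abar Atil C Cbar N =
  mxF (ulsubmx A0) + mxF (ursubmx A0) *m invmx ((sF R)%:M - mxF (drsubmx A0))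
     *m mxF (dlsubmx A0).
Proof.
move=> HN; have HX : invmx (dsubmx N) \in unitmx by rewrite unitmx_inv; exact: kb_unit.
rewrite /Wsig (Az_eq HN) (conj_SX _ HX) block_mxKul block_mxKur block_mxKdl block_mxKdr.
exact: W_inv.
Qed.

Lemma Vsig_eq N : kernel_basis Abar Atil C Cbar N ->
  Vsig A Ahat B Abar Atil Bbar C Cbar N =
  mxF (usubmx B0) + mxF (ursubmx A0) *m invmx ((sF R)%:M - mxF (drsubmx A0))
     *m mxF (dsubmx B0).
Proof.
move=> HN; have HX : invmx (dsubmx N) \in unitmx by rewrite unitmx_inv; exact: kb_unit.
rewrite /Vsig (Az_eq HN) (conj_SX _ HX) block_mxKur block_mxKdr Bz_eq col_mxKu col_mxKd.
exact: W_inv.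
Qed.

Lemma sig_uniq N N' : kernel_basis Abar Atil C Cbar N -> kernel_basis Abar Atil C Cbar N' ->
  forall a b, signal_structure A Ahat B Abar Atil Bbar C Cbar D N a b =
              signal_structure A Ahat B Abar Atil Bbar C Cbar D N' a b.
Proof.
move=> HN HN' a b.
rewrite /signal_structure /Ptil /Pdsf /Qdsf /Dhat.
by rewrite (Wsig_eq HN) (Wsig_eq HN') (Vsig_eq HN) (Vsig_eq HN').
Qed.
End Sig.


Lemma schur_inv (F : fieldType) (n l : nat) (X : 'M[F]_n) (Ah : 'M_(n, l))
  (Ab : 'M_(l, n)) (K : 'M_l) :
  K \in unitmx -> (X - Ah *m invmx K *m Ab) \in unitmx ->
  let E := invmx K in let S := invmx (X - Ah *m invmx K *m Ab) in
  invmx (block_mx X (-Ah) (-Ab) K) =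
  block_mx S (S *m Ah *m E) (E *m Ab *m S) (E + E *m Ab *m S *m Ah *m E).
Proof.
move=> HK HQ E S.
pose Y := block_mx S (S *m Ah *m E) (E *m Ab *m S) (E + E *m Ab *m S *m Ah *m E).
have HQS : (X - Ah *m E *m Ab) *m S = 1%:M by rewrite mulmxV.
have HKE : K *m E = 1%:M by rewrite mulmxV.
have H1 : block_mx X (-Ah) (-Ab) K *m Y = 1%:M.
  rewrite /Y mulmx_block (scalar_mx_block n l 1).
  congr block_mx.
  - by rewrite mulNmx !mulmxA -mulmxBl.
  - rewrite mulNmx mulmxDr opprD addrA addrAC.
    have -> : X *m (S *m Ah *m E) - Ah *m (E *m Ab *m S *m Ah *m E) =
              (X - Ah *m E *m Ab) *m S *m Ah *m E by rewrite !mulmxBl !mulmxA.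
    by rewrite HQS mul1mx subrr.
  - by rewrite !mulmxA HKE mul1mx mulNmx addNr.
  - rewrite mulmxDr !mulmxA HKE !mul1mx mulNmx.
    by rewrite !mulNmx addrC addrK.
have [HM _] := mulmx1_unit H1.
by rewrite -[RHS](mulKmx HM) H1 mulmx1.
Qed.

Lemma ac6 (V : zmodType) (a b c d e f : V) :
  a + b + (c + d) + (f + e) = a + c + (b + (e + d)) + f.
Proof.
rewrite -!addrA; congr (_ + _); rewrite addrCA; congr (_ + _); congr (_ + _).
by rewrite [f + e]addrC addrCA.
Qed.

Lemma alg3 (F : fieldType) (n l p m : nat) (mC : 'M[F]_(p, n)) (mCb : 'M_(p, l))
  (mAb : 'M_(l, n)) (mAh : 'M_(n, l)) (mB : 'M_(n, m)) (mBb : 'M_(l, m))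
  (mD : 'M_(p, m)) (S : 'M_n) (E : 'M_l) :
  (mC + mCb *m E *m mAb) *m S *m (mB + mAh *m E *m mBb) + (mD + mCb *m E *m mBb) =
  row_mx mC mCb *m block_mx S (S *m mAh *m E) (E *m mAb *m S)
     (E + E *m mAb *m S *m mAh *m E) *m col_mx mB mBb + mD.
Proof.
rewrite mul_row_block mul_row_col !mulmxDl !mulmxDr !mulmxA !mulmxDl.
exact: ac6.
Qed.

Lemma part3 (R : realFieldType) m n l p A Ahat B Abar Atil Bbar C Cbar D :
  (1%:M - Atil) \in unitmx ->
  @transfer_fun R m n l p A Ahat B Abar Atil Bbar C Cbar D =
  transfer_fun_gen A Ahat B Abar Atil Bbar C Cbar D.
Proof.
move=> HU; rewrite /transfer_fun /transfer_fun_gen.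
have E1 : block_mx (sF R)%:M 0 0 1%:M - mxF (block_mx A Ahat Abar Atil) =
   block_mx ((sF R)%:M - mxF A) (- mxF Ahat) (- mxF Abar) (mxF (1%:M - Atil)).
  by rewrite /mxF map_block_mx opp_block_mx add_block_mx !sub0r map_mxB map_mx1.
have HK : mxF (1%:M - Atil) \in unitmx by rewrite map_unitmx.
have HAo : mxF (Ao A Ahat Abar Atil) =
   mxF A + mxF Ahat *m invmx (mxF (1%:M - Atil)) *m mxF Abar.
  by rewrite /Ao /mxF map_mxD !map_mxM map_invmx.
have HQ : (sF R)%:M - mxF A - mxF Ahat *m invmx (mxF (1%:M - Atil)) *m mxF Abar
   = (sF R)%:M - mxF (Ao A Ahat Abar Atil) by rewrite HAo opprD addrA.
rewrite E1 (schur_inv HK) HQ ?sI_unit //=.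
set S := invmx ((sF R)%:M - _).
set E := invmx (mxF (1%:M - Atil)).
have HC : mxF (Co Abar Atil C Cbar) = mxF C + mxF Cbar *m E *m mxF Abar.
  by rewrite /Co /mxF map_mxD !map_mxM map_invmx.
have HB : mxF (Bo Ahat B Atil Bbar) = mxF B + mxF Ahat *m E *m mxF Bbar.
  by rewrite /Bo /mxF map_mxD !map_mxM map_invmx.
have HD : mxF (Do Atil Bbar Cbar D) = mxF D + mxF Cbar *m E *m mxF Bbar.
  by rewrite /Do /mxF map_mxD !map_mxM map_invmx.
rewrite HC HB HD /mxF map_row_mx map_col_mx.
exact: alg3.
Qed.


Theorem theorem1 (R : realFieldType) (m l p1 p2 n2 : nat)
  (A : 'M[R]_(p1 + n2)) (Ahat : 'M[R]_(p1 + n2, l)) (B : 'M[R]_(p1 + n2, m))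
  (Abar : 'M[R]_(l, p1 + n2)) (Atil : 'M[R]_l) (Bbar : 'M[R]_(l, m))
  (C : 'M[R]_(p1 + p2, p1 + n2)) (Cbar : 'M[R]_(p1 + p2, l))
  (D : 'M[R]_(p1 + p2, m)) :
  (1%:M - Atil) \in unitmx ->
  \rank (Co Abar Atil C Cbar) = p1 ->
  ulsubmx (Co Abar Atil C Cbar) \in unitmx ->
  ((exists P, max_admissible A Ahat B Abar Atil Bbar C Cbar D P) /\
   (forall P P', max_admissible A Ahat B Abar Atil Bbar C Cbar D P ->
                 max_admissible A Ahat B Abar Atil Bbar C Cbar D P' -> P = P'))
  /\
  ((exists N, kernel_basis Abar Atil C Cbar N) /\
   (forall N, kernel_basis Abar Atil C Cbar N -> dsubmx N \in unitmx) /\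
   (forall N N', kernel_basis Abar Atil C Cbar N ->
                 kernel_basis Abar Atil C Cbar N' ->
      forall a b, signal_structure A Ahat B Abar Atil Bbar C Cbar D N a b =
                  signal_structure A Ahat B Abar Atil Bbar C Cbar D N' a b))
  /\
  transfer_fun A Ahat B Abar Atil Bbar C Cbar D =
  transfer_fun_gen A Ahat B Abar Atil Bbar C Cbar D.
Proof.
move=> HU Hr HC11.
split.
  pose mf := manifest C Cbar D.
  pose hb := fun a => if excluded_middle_informative (mf a) then false else true.
  have Hb : forall a, mf a <-> ~~ hb a.
    move=> a; rewrite /hb; case: excluded_middle_informative => //= H; split => //.
  exact: (@part1_gen _ (ccs_edge A Ahat B Abar Atil Bbar C Cbar D) mf hb Hb).
split; last exact: part3.
split; first by exists (K0 Abar Atil C Cbar); exact: kb_exists.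
split; first by move=> N HN; exact: kb_unit HN.
move=> N N' HN HN'; exact: sig_uniq.
Qed.
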